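(* Let $r,k\ge1$ be integers and let $C_1,\dots,C_r\subset\mathbb{R}^d$ be pairwise disjoint sets, each of size $k$; set $P=\bigcup_{j=1}^rC_j$. Then there exist a point $q\in\mathbb{R}^d$ and a partition $P_1,\dots,P_k$ of $P$ such that $|P_i\cap C_j|=1$ for every $i\in[k]$ and $j\in[r]$, and \[ d(q,\operatorname{conv}P_i)\le(1+\sqrt2)\frac{\operatorname{diam}P}{\sqrt r}\qquad\text{for every } i\in[k]. \]
   Context: $d(q,S)$ is the Euclidean distance from a point to a set; $\operatorname{diam}$ is the Euclidean diameter. *)

(* Defs.v *)
From HB Require Import structures.
From mathcomp Require Import all_boot all_order all_algebra.
From mathcomp Require Import finmap.
From mathcomp Require Import all_classical all_reals.
Set Implicit Arguments. Unset Strict Implicit. Unset Printing Implicit Defensive.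
Import Order.TTheory GRing.Theory Num.Theory.
Local Open Scope ring_scope.
Local Open Scope classical_set_scope.

Definition eucl {R : realType} {d : nat} (v : 'rV[R]_d) : R :=
  Num.sqrt (\sum_(i < d) (v ord0 i) ^+ 2).

Definition conv {R : realType} {d : nat} (S : {fset 'rV[R]_d}) : set 'rV[R]_d :=
  [set y | exists w : 'rV[R]_d -> R,
     (forall x, x \in S -> 0 <= w x) /\
     \sum_(x <- S) w x = 1 /\
     y = \sum_(x <- S) w x *: x].

Definition dist_set {R : realType} {d : nat} (q : 'rV[R]_d) (S : set 'rV[R]_d) : R :=
  inf [set t : R | exists2 y, S y & t = eucl (q - y)].

Definition diam {R : realType} {d : nat} (P : {fset 'rV[R]_d}) : R :=
  sup [set t : R | exists x y : 'rV[R]_d, x \in P /\ y \in P /\ t = eucl (x - y)].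

(* Main.v *)
Require Import Defs.
From HB Require Import structures.
From mathcomp Require Import all_boot all_order all_algebra.
From mathcomp Require Import finmap.
From mathcomp Require Import all_classical all_reals.
From mathcomp Require Import all_fingroup.
From mathcomp Require Import ring lra.
Import Order.TTheory GRing.Theory Num.Theory.
Local Open Scope ring_scope.

Definition dotv {R : realType} {d : nat} (u v : 'rV[R]_d) : R :=
  \sum_(l < d) u ord0 l * v ord0 l.
Definition nsq {R : realType} {d : nat} (u : 'rV[R]_d) : R :=
  \sum_(l < d) u ord0 l ^+ 2.

Lemma nsqE {R : realType} {d : nat} (u : 'rV[R]_d) : nsq u = dotv u u.
Proof. by apply: eq_bigr => l _; rewrite expr2. Qed.

Lemma dotvC {R : realType} {d : nat} (u v : 'rV[R]_d) : dotv u v = dotv v u.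
Proof. by apply: eq_bigr => l _; rewrite mulrC. Qed.

Lemma dotvDl {R : realType} {d : nat} (u v w : 'rV[R]_d) :
  dotv (u + v) w = dotv u w + dotv v w.
Proof. by rewrite /dotv -big_split; apply: eq_bigr => l _; rewrite mxE mulrDl. Qed.

Lemma dotvNl {R : realType} {d : nat} (u w : 'rV[R]_d) : dotv (- u) w = - dotv u w.
Proof. by rewrite /dotv -sumrN; apply: eq_bigr => l _; rewrite mxE mulNr. Qed.

Lemma dotvZl {R : realType} {d : nat} a (u w : 'rV[R]_d) : dotv (a *: u) w = a * dotv u w.
Proof. by rewrite /dotv mulr_sumr; apply: eq_bigr => l _; rewrite mxE mulrA. Qed.

Lemma dotv_suml {R : realType} {d : nat} n (f : 'I_n -> 'rV[R]_d) w :
  dotv (\sum_(j < n) f j) w = \sum_(j < n) dotv (f j) w.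
Proof.
rewrite /dotv exchange_big /=; apply: eq_bigr => l _.
by rewrite summxE mulr_suml.
Qed.

Lemma dotvDr {R : realType} {d : nat} (u v w : 'rV[R]_d) :
  dotv w (u + v) = dotv w u + dotv w v.
Proof. by rewrite dotvC dotvDl !(dotvC w). Qed.

Lemma nsqD {R : realType} {d : nat} (u v : 'rV[R]_d) :
  nsq (u + v) = nsq u + 2 * dotv u v + nsq v.
Proof.
rewrite !nsqE dotvDl !dotvDr (dotvC v u); ring.
Qed.

Lemma nsq_ge0 {R : realType} {d : nat} (u : 'rV[R]_d) : 0 <= nsq u.
Proof. by apply: sumr_ge0 => l _; apply: sqr_ge0. Qed.

Lemma nsqZ {R : realType} {d : nat} a (u : 'rV[R]_d) : nsq (a *: u) = a ^+ 2 * nsq u.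
Proof. by rewrite !nsqE dotvZl dotvC dotvZl; ring. Qed.

Lemma euclE {R : realType} {d : nat} (u : 'rV[R]_d) : eucl u = Num.sqrt (nsq u).
Proof. by []. Qed.

Lemma eucl_ge0 {R : realType} {d : nat} (u : 'rV[R]_d) : 0 <= eucl u.
Proof. exact: sqrtr_ge0. Qed.

Lemma eucl_sq {R : realType} {d : nat} (u : 'rV[R]_d) : eucl u ^+ 2 = nsq u.
Proof. by rewrite euclE sqr_sqrtr // nsq_ge0. Qed.

Lemma euclZ {R : realType} {d : nat} a (u : 'rV[R]_d) : eucl (a *: u) = `|a| * eucl u.
Proof.
by rewrite !euclE nsqZ sqrtrM ?sqr_ge0 // sqrtr_sqr.
Qed.

Lemma dotvNr {R : realType} {d : nat} (u w : 'rV[R]_d) : dotv w (- u) = - dotv w u.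
Proof. by rewrite dotvC dotvNl dotvC. Qed.

Lemma dotv_sumr {R : realType} {d : nat} n (f : 'I_n -> 'rV[R]_d) w :
  dotv w (\sum_(j < n) f j) = \sum_(j < n) dotv w (f j).
Proof. by rewrite dotvC dotv_suml; apply: eq_bigr => j _; rewrite dotvC. Qed.

Lemma le_sum_fset {R : realType} {K : choiceType} (A : {fset K}) (F : K -> R) x :
  x \in A -> (forall y, y \in A -> 0 <= F y) -> F x <= \sum_(y <- A) F y.
Proof.
move=> xA F0; rewrite (big_fsetD1 x) //= lerDl big_seq; apply: sumr_ge0 => y.
by rewrite in_fsetD1 => /andP[_ /F0].
Qed.

Lemma sum2_diff {R : realType} k (a b : 'I_k) (F G : 'I_k -> R) : a != b ->
  (forall i, i != a -> i != b -> F i = G i) ->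
  \sum_(i < k) F i = \sum_(i < k) G i + (F a - G a) + (F b - G b).
Proof.
move=> ab FG; rewrite (bigD1 a) // (bigD1 b) /=; last by rewrite eq_sym.
rewrite [\sum_(i < k) G i](bigD1 a) // (bigD1 b) /=; last by rewrite eq_sym.
rewrite (eq_bigr G); last by move=> i /andP[ia ib]; apply: FG.
set X := \sum_(i | _) G i; lra.
Qed.

Lemma num_bound {R : realType} (n : nat) (D N : R) : (0 < n)%N -> 0 <= D -> 0 <= N ->
  N <= n%:R * D ^+ 2 ->
  `|n%:R^-1| * Num.sqrt N <= (1 + Num.sqrt 2) * D / Num.sqrt n%:R.
Proof.
move=> n0 D0 N0 NB.
have nR : 0 < (n%:R : R) by rewrite ltr0n.
set sr := Num.sqrt (n%:R : R).
have sr0 : 0 < sr by rewrite sqrtr_gt0.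
have srsq : sr ^+ 2 = n%:R by rewrite sqr_sqrtr // ltW.
have h1 : Num.sqrt N <= sr * D.
  have -> : sr * D = Num.sqrt (n%:R * D ^+ 2).
    by rewrite sqrtrM ?ler0n // sqrtr_sqr ger0_norm.
  by rewrite ler_sqrt // mulr_ge0 ?ler0n ?sqr_ge0.
rewrite ger0_norm ?invr_ge0 ?ler0n // -srsq.
apply: (@le_trans _ _ (D / sr)).
  have -> : D / sr = (sr ^+ 2)^-1 * (sr * D) by field; rewrite gt_eqF.
  by rewrite ler_wpM2l // invr_ge0 sqr_ge0.
rewrite -subr_ge0.
have -> : (1 + Num.sqrt 2) * D / sr - D / sr = Num.sqrt 2 * (D / sr) by ring.
by rewrite mulr_ge0 ?sqrtr_ge0 // divr_ge0 // ltW.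
Qed.

Theorem theorem6p1 (R : realType) (d r k : nat) (hr : (1 <= r)%N) (hk : (1 <= k)%N)
  (C : 'I_r -> {fset 'rV[R]_d})
  (hCsize : forall j, #|` C j| = k)
  (hCdisj : forall j j', j != j' -> (C j `&` C j')%fset = fset0)
  (P : {fset 'rV[R]_d})
  (hP : forall x, x \in P <-> exists j, x \in C j) :
  exists (q : 'rV[R]_d) (Ps : 'I_k -> {fset 'rV[R]_d}),
    (forall i i', i != i' -> (Ps i `&` Ps i')%fset = fset0) /\
    (forall x, x \in P <-> exists i, x \in Ps i) /\
    (forall i j, #|` (Ps i `&` C j)%fset| = 1%N) /\
    (forall i, dist_set q (conv (Ps i)) <=
               (1 + Num.sqrt 2) * diam P / Num.sqrt r%:R).
Proof.
have [e [e_inj [e_in e_surj]]] : exists e : 'I_r -> 'I_k -> 'rV[R]_d,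
   (forall j, injective (e j)) /\ (forall j l, e j l \in C j) /\
   (forall j x, x \in C j -> exists l, e j l = x).
  exists (fun j l => nth 0 (enum_fset (C j)) l); split; [|split].
  - move=> j l l' /eqP; rewrite nth_uniq ?fset_uniq ?hCsize // => /eqP.
    exact: val_inj.
  - by move=> j l; apply: mem_nth; rewrite hCsize.
  - move=> j x xC.
    have xi : (index x (enum_fset (C j)) < k)%N by rewrite -(hCsize j) index_mem.
    by exists (Ordinal xi); rewrite /= nth_index.
have Cuniq : forall j j' x, x \in C j -> x \in C j' -> j = j'.
  move=> j j' x h1 h2; apply/eqP; apply: contraT => /hCdisj/fsetP/(_ x).
  by rewrite in_fsetI h1 h2 in_fset0.
have e_col : forall j j' l l', e j l = e j' l' -> j = j'.
  by move=> j j' l l' E; apply: (Cuniq _ _ (e j l)); rewrite // E.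
pose T (s : {ffun 'I_r -> {perm 'I_k}}) i := \sum_(j < r) e j (s j i).
pose Phi s := \sum_(i < k) nsq (T s i).
pose D := diam P.
have Pub : has_ubound
    [set t : R | exists x y, x \in P /\ y \in P /\ t = eucl (x - y)].
  exists (\sum_(x <- P) \sum_(y <- P) eucl (x - y)) => t [x [y [xP [yP ->]]]].
  apply: (@le_trans _ _ (\sum_(y' <- P) eucl (x - y'))).
    by apply: (le_sum_fset P (fun y => eucl (x - y)) y yP) => z _; apply: eucl_ge0.
  apply: (le_sum_fset P (fun x => \sum_(y <- P) eucl (x - y)) x xP) => z _.
  by apply: sumr_ge0 => ? _; apply: eucl_ge0.
have diam_ge : forall x y, x \in P -> y \in P -> eucl (x - y) <= D.
  by move=> x y xP yP; apply: (ub_le_sup Pub); exists x, y.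
have eP : forall j l, e j l \in P by move=> j l; apply/hP; exists j; apply: e_in.
have j0 : 'I_r := Ordinal hr.
have i0 : 'I_k := Ordinal hk.
have D0 : 0 <= D.
  by apply: le_trans (diam_ge _ _ (eP j0 i0) (eP j0 i0)); apply: eucl_ge0.
case: (@arg_minP _ _ _ [ffun=> 1%g] predT Phi isT) => s _ smin.
have key : forall a b, nsq (T s a - T s b) <= r%:R * D ^+ 2.
  move=> a b; have [->|ab] := eqVneq a b.
    rewrite subrr /nsq big1 ?mulr_ge0 ?ler0n ?sqr_ge0 // => l _.
    by rewrite mxE expr0n.
  pose w j := e j (s j b) - e j (s j a).
  have step : forall j, 0 <= dotv (T s a - T s b) (w j) + nsq (w j).
    move=> j.
    pose s' : {ffun 'I_r -> {perm 'I_k}} :=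
      [ffun j' => if j' == j then (tperm a b * s j)%g else s j'].
    have Ts' : forall i, T s' i = T s i + (e j (s j (tperm a b i)) - e j (s j i)).
      move=> i; rewrite /T (bigD1 j) //= [in RHS](bigD1 j) //= ffunE eqxx permM.
      rewrite (eq_bigr (fun j' => e j' (s j' i))); last first.
        by move=> j' /negbTE jj; rewrite ffunE jj.
      by rewrite [RHS]addrC addrA subrK.
    have := smin s' isT.
    rewrite /Phi (@sum2_diff _ _ a b (fun i => nsq (T s' i)) (fun i => nsq (T s i)) ab); last first.
      by move=> i ia ib; rewrite Ts' tpermD 1?eq_sym // subrr addr0.
    rewrite !Ts' tpermL tpermR -/(w j).
    have -> : e j (s j a) - e j (s j b) = - w j by rewrite opprB.
    move: (w j) => W.
    rewrite !nsqD dotvDl dotvNl dotvNr.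
    have -> : nsq (- W) = nsq W by rewrite !nsqE dotvNl dotvNr opprK.
    lra.
  have : 0 <= \sum_(j < r) (dotv (T s a - T s b) (w j) + nsq (w j)).
    by apply: sumr_ge0 => j _; apply: step.
  rewrite big_split /= -dotv_sumr.
  have -> : \sum_(j < r) w j = - (T s a - T s b) by rewrite sumrB opprB.
  rewrite dotvNr -nsqE.
  have : \sum_(j < r) nsq (w j) <= r%:R * D ^+ 2.
    apply: (@le_trans _ _ (\sum_(j < r) D ^+ 2)).
      apply: ler_sum => j _; rewrite /w -eucl_sq.
      have := diam_ge _ _ (eP j (s j b)) (eP j (s j a)).
      have := eucl_ge0 (e j (s j b) - e j (s j a)).
      move: (eucl _) => E; nra.
    by rewrite sumr_const card_ord mulr_natl.
  lra.
pose Ps i := [fset e j (s j i) | j : 'I_r]%fset.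
have inPs : forall i x, x \in Ps i <-> exists j, x = e j (s j i).
  move=> i x; split => [/imfsetP [j _ ->]|[j ->]]; first by exists j.
  by apply/imfsetP; exists j.
have Psinj : forall i, {in xpredT &, injective (fun j => e j (s j i))}.
  by move=> i j j' _ _ /e_col.
exists (r%:R^-1 *: T s i0), Ps.
split; [|split; [|split]].
- move=> i i' ii'; apply/fsetP => x; rewrite in_fsetI in_fset0.
  apply/negbTE/negP => /andP[/inPs[j Ej] /inPs[j' Ej']].
  have jj := e_col j j' _ _ (etrans (esym Ej) Ej'); subst j'.
  move: Ej'; rewrite Ej => /e_inj /perm_inj iie.
  by rewrite iie eqxx in ii'.
- move=> x; split.
  + move=> /hP [j /(e_surj j) [l El]]; exists ((s j)^-1 l)%g.
    by apply/inPs; exists j; rewrite permKV.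
  + by move=> [i /inPs [j ->]]; apply/hP; exists j; apply: e_in.
- move=> i j; rewrite (_ : (Ps i `&` C j)%fset = [fset e j (s j i)]%fset) ?cardfs1 //.
  apply/fsetP => x; rewrite in_fsetI in_fset1; apply/andP/eqP => [[/inPs [j' ->] xC]|->].
    by rewrite (Cuniq _ _ _ (e_in j' (s j' i)) xC).
  by split; [apply/inPs; exists j | apply: e_in].
- move=> i.
  have rR : (r%:R : R) != 0 by rewrite pnatr_eq0 -lt0n.
  have cin : conv (Ps i) (r%:R^-1 *: T s i).
    exists (fun _ => r%:R^-1); split; [|split].
    + by move=> x _; rewrite invr_ge0 ler0n.
    + rewrite big_imfset /=; last exact: Psinj.
      rewrite big_enum /= sumr_const card_ord.
      have -> : r%:R^-1 *+ r = r%:R^-1 * r%:R :> R by rewrite mulr_natr.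
      exact: mulVf.
    + rewrite big_imfset /=; last exact: Psinj.
      by rewrite big_enum /= -scaler_sumr.
  have hlb : has_lbound [set t : R | exists2 y, conv (Ps i) y &
                                       t = eucl (r%:R^-1 *: T s i0 - y)].
    by exists 0 => t [y _ ->]; apply: eucl_ge0.
  apply: (@le_trans _ _ (eucl (r%:R^-1 *: T s i0 - r%:R^-1 *: T s i))).
    by apply: (ge_inf hlb); exists (r%:R^-1 *: T s i).
  rewrite -scalerBr euclZ euclE.
  by apply: num_bound => //; exact: nsq_ge0.
Qed.
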